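(* Assume the standing setting below and let $k\ge1$ be such that (R1)–(R3) hold. Let $\lambda\in\mathbb{R}$, let $\bar y\in\mathbb{R}^k$ have last component $0$, let $x=V_k\bar y$, and assume $J^{(k)}(\bar y,\lambda)$ is nonsingular. Define the projected Newton step $$\begin{pmatrix}\Delta y\\ \Delta\lambda\end{pmatrix}=-J^{(k)}(\bar y,\lambda)^{-1}F^{(k)}(\bar y,\lambda),\qquad \Delta x=V_k\Delta y.$$ Then $$\begin{pmatrix}\Delta x\\ \Delta\lambda\end{pmatrix}^T\nabla f(x,\lambda)=-\|F(x,\lambda)\|^2\le 0,$$ so $(\Delta x,\Delta\lambda)$ is a descent direction for $f$ at $(x,\lambda)$ whenever $F(x,\lambda)\ne0$.
   Context: Standing setting. $A\in\mathbb{R}^{m\times n}$ with $m\ge n$, $b\in\mathbb{R}^m$, $b\ne0$, $\sigma>0$, $\|\cdot\|$ the Euclidean norm. $F(x,\lambda)=\begin{pmatrix}\lambda A^T(Ax-b)+x\\ \tfrac12\|Ax-b\|^2-\tfrac{\sigma^2}{2}\end{pmatrix}$, with Jacobian $J(x,\lambda)=\begin{pmatrix}\lambda A^TA+I & A^T(Ax-b)\\ (Ax-b)^TA & 0\end{pmatrix}$, and merit function $f(x,\lambda)=\tfrac12\|F(x,\lambda)\|^2$ (so $\nabla f=J^TF$). Golub–Kahan bidiagonalization (Bidiag1): $u_0=b/\|b\|$, $\nu_0v_{-1}=0$, and for $j=0,1,2,\dots$: $r_j=A^Tu_j-\nu_jv_{j-1}$, $\mu_j=\|r_j\|$, $v_j=r_j/\mu_j$,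 $p_j=Av_j-\mu_ju_j$, $\nu_{j+1}=\|p_j\|$, $u_{j+1}=p_j/\nu_{j+1}$. No breakdown is assumed (all $\mu_j,\nu_j>0$), together with: (R1) $V_{k+1}=[v_0,\dots,v_k]$ and $U_{k+1}=[u_0,\dots,u_k]$ have orthonormal columns; (R2) $AV_k=U_{k+1}B_{k+1,k}$; (R3) $A^TU_{k+1}=V_kB_{k+1,k}^T+\mu_kv_ke_{k+1}^T$, where $V_k=[v_0,\dots,v_{k-1}]$, $e_{k+1}=(0,\dots,0,1)^T\in\mathbb{R}^{k+1}$, and $B_{k+1,k}\in\mathbb{R}^{(k+1)\times k}$ is lower bidiagonal with diagonal $\mu_0,\dots,\mu_{k-1}$ and subdiagonal $\nu_1,\dots,\nu_k$. $c_{k+1}=(\|b\|,0,\dots,0)^T\in\mathbb{R}^{k+1}$. $F^{(k)}(y,\lambda)=\begin{pmatrix}\lambda B_{k+1,k}^T(B_{k+1,k}y-c_{k+1})+y\\ \tfrac12\|B_{k+1,k}y-c_{k+1}\|^2-\tfrac{\sigma^2}{2}\end{pmatrix}$, $J^{(k)}(y,\lambda)=\begin{pmatrix}\lambda B_{k+1,k}^TB_{k+1,k}+I_k & B_{k+1,k}^T(B_{k+1,k}y-c_{k+1})\\ (B_{k+1,k}y-c_{k+1})^TB_{k+1,k} & 0\end{pmatrix}$. *)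

(* Defs.v *)
(* Real numbers are modelled by an arbitrary real closed
   field R : rcfType (the statement is purely algebraic; Num.sqrt gives the
   Euclidean norm). *)
From HB Require Import structures.
From mathcomp Require Import all_boot all_order all_algebra.
Set Implicit Arguments. Unset Strict Implicit. Unset Printing Implicit Defensive.
Import Order.TTheory GRing.Theory Num.Theory.
Local Open Scope ring_scope.

Section Defs.
Variable R : rcfType.

Definition vnorm p (x : 'cV[R]_p) : R := Num.sqrt ((x^T *m x) 0 0).

Definition Fsys p q (M : 'M[R]_(p, q)) (c : 'cV[R]_p) (sigma : R)
    (x : 'cV[R]_q) (lam : R) : 'cV[R]_(q + 1) :=
  col_mx (lam *: (M^T *m (M *m x - c)) + x)
         ((2^-1 * vnorm (M *m x - c) ^+ 2 - 2^-1 * sigma ^+ 2)%:M).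

Definition Jsys p q (M : 'M[R]_(p, q)) (c : 'cV[R]_p)
    (x : 'cV[R]_q) (lam : R) : 'M[R]_(q + 1) :=
  block_mx (lam *: (M^T *m M) + 1%:M) (M^T *m (M *m x - c))
           ((M *m x - c)^T *m M) 0.

(* gradient of f = 1/2 ||F||^2 : J^T F *)
Definition grad_f p q (M : 'M[R]_(p, q)) (c : 'cV[R]_p) (sigma : R)
    (x : 'cV[R]_q) (lam : R) : 'cV[R]_(q + 1) :=
  (Jsys M c x lam)^T *m Fsys M c sigma x lam.

(* Bidiag1 recursion, required for the indices needed up to step k:
   r_j, mu_j, v_j for j <= k and p_j, nu_{j+1}, u_{j+1} for j < k,
   with the convention nu_0 v_{-1} = 0, and no breakdown. *)
Definition bidiag1_upto m n (A : 'M[R]_(m, n)) (b : 'cV[R]_m)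
    (u : nat -> 'cV[R]_m) (v : nat -> 'cV[R]_n) (mu nu : nat -> R) (k : nat)
    : Prop :=
  [/\ u 0%N = (vnorm b)^-1 *: b,
      forall j, (j <= k)%N ->
        let r := A^T *m u j - (if j is j'.+1 then nu j *: v j' else 0) in
        mu j = vnorm r /\ v j = (mu j)^-1 *: r,
      forall j, (j < k)%N ->
        let pj := A *m v j - mu j *: u j in
        nu j.+1 = vnorm pj /\ u j.+1 = (nu j.+1)^-1 *: pj,
      forall j, (j <= k)%N -> 0 < mu j &
      forall j, (1 <= j <= k)%N -> 0 < nu j].

Definition Vmat n (v : nat -> 'cV[R]_n) p : 'M[R]_(n, p) :=
  \matrix_(i < n, j < p) v j i 0.
Definition Umat m (u : nat -> 'cV[R]_m) p : 'M[R]_(m, p) :=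
  \matrix_(i < m, j < p) u j i 0.

Definition Bmat (mu nu : nat -> R) k : 'M[R]_(k.+1, k) :=
  \matrix_(i < k.+1, j < k)
    if i == j :> nat then mu j
    else if i == j.+1 :> nat then nu i else 0.

Definition elast k : 'cV[R]_k.+1 := \col_(i < k.+1) (if i == k :> nat then 1 else 0).

Definition cvec m k (b : 'cV[R]_m) : 'cV[R]_k.+1 :=
  \col_(i < k.+1) (if i == 0 :> nat then vnorm b else 0).

End Defs.

(* Main.v *)
Require Import Defs.
From HB Require Import structures.
From mathcomp Require Import all_boot all_order all_algebra.
Import Order.TTheory GRing.Theory Num.Theory.
Local Open Scope ring_scope.

Lemma tmx_ge0 (R : rcfType) p (x : 'cV[R]_p) : 0 <= (x^T *m x) 0 0.
Proof.
rewrite mxE; apply: sumr_ge0 => i _; rewrite mxE -expr2; exact: sqr_ge0.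
Qed.

Lemma tmx_gt0 (R : rcfType) p (x : 'cV[R]_p) : x != 0 -> 0 < (x^T *m x) 0 0.
Proof.
move=> hx; rewrite lt_def tmx_ge0 andbT; apply/eqP => h0.
move/eqP: hx; apply; apply/matrixP => i j; rewrite (ord1 j) mxE.
move: h0; rewrite mxE => /eqP; rewrite psumr_eq0.
  by move=> /allP /(_ i (mem_index_enum _)) /=; rewrite mxE mulf_eq0 orbb => /eqP.
by move=> l _; rewrite mxE -expr2 sqr_ge0.
Qed.

Lemma vnorm_sq (R : rcfType) p (x : 'cV[R]_p) : vnorm x ^+ 2 = (x^T *m x) 0 0.
Proof. by rewrite /vnorm sqr_sqrtr // tmx_ge0. Qed.

Theorem theorem3p3 (R : rcfType) (m n k : nat)
  (A : 'M[R]_(m, n)) (b : 'cV[R]_m) (sigma : R)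
  (u : nat -> 'cV[R]_m) (v : nat -> 'cV[R]_n) (mu nu : nat -> R)
  (hmn : (n <= m)%N) (hb : b != 0) (hsigma : 0 < sigma) (hk : (1 <= k)%N)
  (hbid : bidiag1_upto A b u v mu nu k)
  (R1V : (Vmat v k.+1)^T *m Vmat v k.+1 = 1%:M)
  (R1U : (Umat u k.+1)^T *m Umat u k.+1 = 1%:M)
  (R2 : A *m Vmat v k = Umat u k.+1 *m Bmat mu nu k)
  (R3 : A^T *m Umat u k.+1
        = Vmat v k *m (Bmat mu nu k)^T + mu k *: (v k *m (elast R k)^T))
  (lam : R) (ybar : 'cV[R]_k)
  (hylast : forall i : 'I_k, i.+1 = k -> ybar i 0 = 0)
  (x : 'cV[R]_n) (hx : x = Vmat v k *m ybar)
  (hJ : Jsys (Bmat mu nu k) (cvec k b) ybar lam \in unitmx)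
  (d : 'cV[R]_(k + 1))
  (hd : d = - (invmx (Jsys (Bmat mu nu k) (cvec k b) ybar lam)
               *m Fsys (Bmat mu nu k) (cvec k b) sigma ybar lam))
  (dx : 'cV[R]_n) (hdx : dx = Vmat v k *m usubmx d) :
  let g := grad_f A b sigma x lam in
  let dir := col_mx dx (dsubmx d) in
  [/\ (dir^T *m g) 0 0 = - vnorm (Fsys A b sigma x lam) ^+ 2,
      (dir^T *m g) 0 0 <= 0 &
      (Fsys A b sigma x lam != 0 -> (dir^T *m g) 0 0 < 0)].
Proof.
move=> g dir.
set V := Vmat v k; set U := Umat u k.+1; set B := Bmat mu nu k; set c := cvec k b.
set s := B *m ybar - c.
have Ub : U *m c = b.
  have hnb : vnorm b != 0.
    by rewrite /vnorm sqrtr_eq0 -ltNge tmx_gt0.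
  case: hbid => hu0 _ _ _ _.
  apply/matrixP => i j; rewrite (ord1 j) !mxE (bigD1 ord0) //= big1 ?addr0.
    by rewrite !mxE /= hu0 mxE mulrAC mulVf // mul1r.
  by move=> l hl; rewrite !mxE; case: eqP => [h|]; [by case/eqP: hl; apply: val_inj|]; rewrite mulr0.
have hr : A *m x - b = U *m s.
  by rewrite hx mulmxA R2 -Ub /s mulmxBr mulmxA.
have hes : (elast R k)^T *m s = 0.
  apply/matrixP => i j; rewrite (ord1 i) (ord1 j) !mxE.
  rewrite (bigD1 ord_max) //= big1 ?addr0; last first.
    by move=> l hl; rewrite !mxE; case: eqP => [h|]; [by case/eqP: hl; apply: val_inj|]; rewrite mul0r.
  rewrite !mxE eqxx mul1r /=.
  have -> : (k == 0)%N = false by apply/negbTE; rewrite -lt0n.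
  rewrite subr0 big1 // => l _; rewrite /B !mxE /=.
  have -> : (k == l)%N = false by apply/negbTE; rewrite neq_ltn ltn_ord orbT.
  case: eqP => [h|]; last by rewrite mul0r.
  by rewrite hylast ?mulr0.
have hQ : A^T *m (A *m x - b) = V *m (B^T *m s).
  by rewrite hr mulmxA R3 mulmxDl -scalemxAl -(mulmxA (v k)) hes mulmx0 scaler0 addr0 mulmxA.
have VV : V^T *m V = 1%:M.
  apply/matrixP => i j; rewrite !mxE.
  have := congr1 (fun M : 'M[R]_k.+1 => M (widen_ord (leqnSn k) i) (widen_ord (leqnSn k) j)) R1V.
  by rewrite /= !mxE => <-; apply: eq_bigr => l _; rewrite !mxE.
have UU : U^T *m U = 1%:M := R1U.
have hns : vnorm (A *m x - b) = vnorm s.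
  by rewrite /vnorm hr trmx_mul -mulmxA (mulmxA U^T) UU mul1mx.
pose W : 'M[R]_(n + 1, k + 1) := block_mx V 0 0 1%:M.
set Fk := Fsys B c sigma ybar lam.
set Jk := Jsys B c ybar lam.
have hWW : W^T *m W = 1%:M.
  rewrite /W tr_block_mx !trmx0 trmx1 mulmx_block.
  by rewrite VV !mulmx0 !mul0mx !addr0 add0r mulmx1 scalar_mx_block.
have hF : Fsys A b sigma x lam = W *m Fk.
  rewrite /Fsys hns hQ /W mul_block_col !mul0mx addr0 add0r mul1mx.
  by rewrite hx scalemxAr -mulmxDr.
have hdir : dir = W *m d.
  by rewrite /dir -{2}(vsubmxK d) /W mul_block_col !mul0mx addr0 add0r mul1mx hdx.
have hJW : W^T *m Jsys A b x lam *m W = Jk.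
  have hQt : (A *m x - b)^T *m A = (V *m (B^T *m s))^T by rewrite -hQ trmx_mul trmxK.
  rewrite /Jsys hQt hQ.
  rewrite /W tr_block_mx !trmx0 trmx1 !mulmx_block.
  rewrite !mulmx0 !mul0mx !addr0 !add0r !mulmx1 !mul1mx.
  rewrite (mulmxA V^T V) VV mul1mx (trmx_mul V) -(mulmxA _ V^T V) VV mulmx1.
  rewrite mulmxDr mulmxDl mulmx1 VV -scalemxAr -scalemxAl.
  rewrite (mulmxA V^T) -trmx_mul -mulmxA R2 trmx_mul -!mulmxA (mulmxA U^T) UU mul1mx.
  by rewrite /Jk /Jsys trmx_mul trmxK.
have key : (dir^T *m g) 0 0 = - ((Fsys A b sigma x lam)^T *m Fsys A b sigma x lam) 0 0.
  have -> : (Fsys A b sigma x lam)^T *m Fsys A b sigma x lam = Fk^T *m Fk.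
    by rewrite hF trmx_mul -mulmxA (mulmxA W^T) hWW mul1mx.
  have hJd : Jk *m d = - Fk by rewrite hd mulmxN mulKVmx.
  have -> : dir^T *m g = (Jk *m d)^T *m Fk.
    rewrite /g /grad_f hdir hF -hJW.
    by rewrite !trmx_mul !trmxK !mulmxA.
  by rewrite hJd linearN /= mulNmx mxE.
have hge := @tmx_ge0 _ _ (Fsys A b sigma x lam).
split.
- by rewrite key vnorm_sq.
- by rewrite key oppr_le0.
- by move=> hF0; rewrite key oppr_lt0 (@tmx_gt0 _ _ _ hF0).
Qed.
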